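(* Let $\mathbb{F}$ be a field of odd characteristic, let $n\ge 5$, and let $A\in\mathbb{M}_n(\mathbb{F})$ be a non-derogatory matrix with trace $c=\operatorname{Trace}(A)$. Then: (1) If $c\neq 0$, there exists $M\in\mathbb{M}_n(\mathbb{F})$ with $M^2=0$ such that $A+M$ is diagonalizable over $\mathbb{F}$ and its set of eigenvalues is exactly $\{0,c,-c\}$. (2) If $c=0$ and $n$ is odd, there exists $M\in\mathbb{M}_n(\mathbb{F})$ with $M^2=0$ such that $A+M$ is diagonalizable over $\mathbb{F}$ and its set of eigenvalues is exactly $\{0,1,-1\}$. (3) If $c=0$, $n$ is even and $\mathbb{F}\neq\mathbb{F}_3$, there exists $M\in\mathbb{M}_n(\mathbb{F})$ with $M^2=0$ such that $A+M$ is diagonalizable over $\mathbb{F}$ with at most $4$ distinct eigenvalues. In particular, if $\mathbb{F}$ is a finite field of odd cardinality $q\ge 5$, every non-derogatory matrix in $\mathbb{M}_n(\mathbb{F})$ with $n\ge 5$ can be written as $D+M$ with $D$ diagonalizable over $\mathbb{F}$ and $M^2=0$.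
   Context: A square matrix is non-derogatory if its minimal polynomial equals its characteristic polynomial (equivalently, it is similar to the companion matrix of its characteristic polynomial). A matrix $X\in\mathbb{M}_n(\mathbb{F})$ is diagonalizable if there is an invertible $U\in\mathbb{M}_n(\mathbb{F})$ with $U^{-1}XU$ diagonal. A matrix $M$ is square-zero if $M^2=0$. *)

(* Defs.v *)
From HB Require Import structures.
From mathcomp Require Import all_boot all_order all_algebra.
Set Implicit Arguments. Unset Strict Implicit. Unset Printing Implicit Defensive.
Import GRing.Theory.
Local Open Scope ring_scope.

(* MathComp's [mxminpoly] is only defined for
   matrices of size n'.+1; the 0x0 case is vacuous (and irrelevant here,
   since n >= 5). *)
Definition nonderogatory (F : fieldType) (n : nat) : 'M[F]_n -> Prop :=
  match n return 'M[F]_n -> Prop with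
  | 0 => fun _ => True
  | n'.+1 => fun A => mxminpoly A = char_poly A
  end.

Definition odd_char (F : fieldType) : Prop :=
  exists p : nat, p \in [pchar F] /\ odd p.

(* Main.v *)
Require Import Defs.
From HB Require Import structures.
From mathcomp Require Import all_boot all_order all_algebra all_field.
From Stdlib Require Import Classical.
From mathcomp Require Import zify ring.
Set Implicit Arguments. Unset Strict Implicit. Unset Printing Implicit Defensive.
Import GRing.Theory.
Local Open Scope ring_scope.

Section PolySplit.
Variable F : fieldType.
Implicit Types f g : {poly F}.

Lemma dvd_self_unit (h b : {poly F}) : b != 0 -> h * b %| b -> size h == 1%N.
Proof. by move=> b0; rewrite -{2}[b]mul1r dvdp_mul2r // dvdp1. Qed.

Lemma lcm_split f g : f != 0 -> g != 0 ->
  exists a b, [/\ a %| f, b %| g, coprimep a b, f %| a * b & g %| a * b].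
Proof.
move=> f0 g0.
set d := gcdp f g.
have d0 : d != 0 by rewrite gcdp_eq0 negb_and f0.
have df : d %| f by apply: dvdp_gcdl.
have dg : d %| g by apply: dvdp_gcdr.
set f1 := f %/ d; set g1 := g %/ d.
have cop1 : coprimep f1 g1 by apply: coprimep_div_gcd; rewrite f0.
have ef : f = f1 * d by rewrite divpK.
have eg : g = g1 * d by rewrite divpK.
set b := gdcop f1 g; set a := gdcop b f.
have [bg cbf1 bmax] : [/\ b %| g, coprimep b f1 &
    forall e, e %| g -> coprimep e f1 -> e %| b].
  rewrite /b; case: gdcopP => r rg; rewrite (negPf g0) orbF => cr rmax.
  by split.
have [af cab amax] : [/\ a %| f, coprimep a b &
    forall e, e %| f -> coprimep e b -> e %| a].
  rewrite /a; case: gdcopP => r rf; rewrite (negPf f0) orbF => cr rmax.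
  by split.
have b0 : b != 0 by apply: contraNneq g0 => b0; move: bg; rewrite b0 dvd0p.
have a0 : a != 0 by apply: contraNneq f0 => a0; move: af; rewrite a0 dvd0p.
have g1b : g1 %| b.
  apply: bmax; first by rewrite eg dvdp_mulr.
  by rewrite coprimep_sym.
exists a, b; split => //.
- have [r er] := dvdpP _ _ af.
  have crf1 : coprimep r f1.
    rewrite coprimep_def; set h := gcdp r f1.
    apply: (@dvd_self_unit h a a0); apply: amax.
      by rewrite er dvdp_mul2r // dvdp_gcdl.
    rewrite coprimepMl cab andbT.
    apply: (coprimep_dvdr (dvdp_gcdr r f1)).
    by rewrite coprimep_sym.
  have rd : r %| d.
    have : r %| f by rewrite er dvdp_mulr.
    by rewrite ef Gauss_dvdpr.
  have rb : r %| b.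
    by apply: bmax => //; apply: dvdp_trans rd dg.
  by rewrite er mulrC dvdp_mul2l.
- have [s es] := dvdpP _ _ bg.
  have [t et] := dvdpP _ _ g1b.
  have g10 : g1 != 0 by apply: contraNneq g0 => e; rewrite eg e mul0r.
  have sd : s %| d.
    have : d * g1 = (s * t) * g1 by rewrite mulrC -eg es et mulrA.
    by move/(mulIf g10) ->; apply: dvdp_mulr.
  have csb : coprimep s b.
    rewrite coprimep_def; set h := gcdp s b.
    apply: (@dvd_self_unit h b b0); apply: bmax.
      by rewrite es dvdp_mul2r // dvdp_gcdl.
    rewrite coprimepMl cbf1 andbT.
    exact: (coprimep_dvdr (dvdp_gcdr s b)).
  have sa : s %| a by apply: amax => //; apply: dvdp_trans sd df.
  by rewrite es dvdp_mul2r.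
Qed.
End PolySplit.

Lemma ex_max_nat (P : nat -> Prop) (B : nat) :
  (exists k, P k) -> (forall k, P k -> (k <= B)%N) ->
  exists k, P k /\ forall j, P j -> (j <= k)%N.
Proof.
move=> [k0 Pk0] bnd.
suff H : forall m, forall k, P k -> (B - k <= m)%N ->
  exists k, P k /\ forall j, P j -> (j <= k)%N by exact: (H _ k0 Pk0 (leqnn _)).
elim=> [|m IH] k Pk hk.
  exists k; split=> // j Pj; have := bnd j Pj; lia.
case: (classic (exists j, P j /\ (k < j)%N)) => [[j [Pj kj]]|nj].
  apply: (IH j Pj); have := bnd j Pj; lia.
exists k; split=> // j Pj; case: (leqP j k) => // kj; case: nj; by exists j.
Qed.

Section Lmp.
Variables (F : fieldType) (n' : nat).
Local Notation N := n'.+1.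
Variable A : 'M[F]_N.

Definition kills (v : 'rV[F]_N) (p : {poly F}) := v *m horner_mx A p = 0.
Definition islmp v p := kills v p /\ forall q, kills v q -> p %| q.

Lemma hornerM_comm (p q : {poly F}) :
  horner_mx A (p * q) = horner_mx A p *m horner_mx A q.
Proof. by rewrite rmorphM. Qed.

Lemma kills_mul v p q : kills v p -> kills v (q * p).
Proof. by rewrite /kills mulrC hornerM_comm mulmxA => ->; rewrite mul0mx. Qed.

Lemma kills_mulr v p q : kills v p -> kills v (p * q).
Proof. by rewrite mulrC; apply: kills_mul. Qed.

Lemma kills_add v p q : kills v p -> kills v q -> kills v (p + q).
Proof. by rewrite /kills rmorphD mulmxDr => -> ->; rewrite addr0. Qed.

Lemma kills_shift v g p : kills (v *m horner_mx A g) p <-> kills v (g * p).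
Proof. by rewrite /kills hornerM_comm mulmxA. Qed.

Lemma kills_min v : kills v (mxminpoly A).
Proof. by rewrite /kills mx_root_minpoly mulmx0. Qed.

Lemma minpoly_neq0 : mxminpoly A != 0.
Proof. by rewrite monic_neq0 // mxminpoly_monic. Qed.

Lemma exists_lmp v : exists p, islmp v p.
Proof.
have [k [[p [kp [p0 sp]]] kmin]] : exists k, (exists p, kills v p /\ p != 0 /\ size p = k)
   /\ forall j, (exists p, kills v p /\ p != 0 /\ size p = j) -> (k <= j)%N.
  set P := fun k => exists p, kills v p /\ p != 0 /\ size p = k.
  have : exists k, P k by exists (size (mxminpoly A)), (mxminpoly A);
    split; [exact: kills_min| split; [exact: minpoly_neq0|]].
  move=> [k0 Pk0].
  suff H : forall m k, P k -> (k <= m)%N -> exists k, P k /\ forall j, P j -> (k <= j)%N.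
    exact: (H k0 k0 Pk0 (leqnn _)).
  elim=> [|m IH] k Pk km.
    by exists k; split=> // j _; move: km; rewrite leqn0 => /eqP->.
  case: (classic (exists j, P j /\ (j < k)%N)) => [[j [Pj jk]]|nj].
    by apply: (IH j Pj); lia.
  exists k; split=> // j Pj; case: (leqP k j) => // jk; case: nj; by exists j.
exists p; split=> // q kq.
have km : kills v (q %% p).
  have -> : q %% p = q + (- (q %/ p)) * p by rewrite {2}(divp_eq q p); ring.
  by apply: kills_add => //; apply: kills_mul.
rewrite /dvdp; apply/eqP; apply: contraTeq isT => qp0.
have := kmin (size (q %% p)) (ex_intro _ _ (conj km (conj qp0 erefl))).
by rewrite -sp leqNgt ltn_modp p0.
Qed.

Lemma lmp_neq0 v p : islmp v p -> p != 0.
Proof.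
move=> [_ H]; apply: contraTneq (H _ (kills_min v)) => ->.
by rewrite dvd0p minpoly_neq0.
Qed.

Lemma lmp_shift u g h : islmp u (g * h) -> islmp (u *m horner_mx A g) h.
Proof.
move=> Hu; have gh0 := lmp_neq0 Hu.
have g0 : g != 0 by apply: contraNneq gh0 => ->; rewrite mul0r.
case: Hu => k1 k2; split; first by apply/kills_shift.
by move=> q /kills_shift /k2; rewrite dvdp_mul2l.
Qed.

Lemma lmp_add u w a b : coprimep a b -> islmp u a -> islmp w b ->
  islmp (u + w) (a * b).
Proof.
move=> cab [ku Hu] [kw Hw]; split.
  rewrite /kills mulmxDl; have := kills_mulr b ku; have := kills_mul a kw.
  by rewrite /kills => -> ->; rewrite addr0.
move=> q kq.
have e : u *m horner_mx A q = - (w *m horner_mx A q).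
  by apply/eqP; rewrite -addr_eq0 -mulmxDl; apply/eqP.
rewrite Gauss_dvdp //; apply/andP; split.
  rewrite -(Gauss_dvdpl q cab); apply: Hu.
  by rewrite /kills hornerM_comm mulmxA e mulNmx -mulmxA -hornerM_comm mulrC
     hornerM_comm mulmxA kw mul0mx oppr0.
rewrite -(Gauss_dvdpl q (_ : coprimep b a)); last by rewrite coprimep_sym.
apply: Hw.
have e' : w *m horner_mx A q = - (u *m horner_mx A q) by rewrite e opprK.
by rewrite /kills hornerM_comm mulmxA e' mulNmx -mulmxA -hornerM_comm mulrC
   hornerM_comm mulmxA ku mul0mx oppr0.
Qed.

Lemma lmp_size_le v p : islmp v p -> (size p <= size (mxminpoly A))%N.
Proof. by move=> [_ H]; apply: dvdp_leq (minpoly_neq0) (H _ (kills_min v)). Qed.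

Lemma exists_max_lmp : exists v p, islmp v p /\
  forall w q, islmp w q -> (size q <= size p)%N.
Proof.
have [p0 H0] := exists_lmp 0.
have bnd : forall k, (exists v p, islmp v p /\ size p = k) -> (k <= size (mxminpoly A))%N.
  by move=> k [v [p [Hp <-]]]; apply: lmp_size_le Hp.
have [k [[v [p [Hp sp]]] kmax]] := @ex_max_nat
  (fun k => exists v p, islmp v p /\ size p = k) (size (mxminpoly A))
  (ex_intro _ _ (ex_intro _ 0 (ex_intro _ p0 (conj H0 erefl)))) bnd.
exists v, p; split=> // w q Hq; rewrite sp; apply: kmax; by exists w, q.
Qed.

End Lmp.

Section Cyclic.
Variables (F : fieldType) (n' : nat).
Local Notation N := n'.+1.
Variable A : 'M[F]_N.

Definition krylov (v : 'rV[F]_N) : 'M[F]_N := \matrix_(i < N) (v *m A ^+ i).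

Lemma horner_mx_poly (x : 'rV[F]_N) :
  horner_mx A (\poly_(i < N) x 0 (inord i)) = \sum_(i < N) x 0 i *: A ^+ i.
Proof.
rewrite poly_def rmorph_sum; apply: eq_bigr => i _.
by rewrite inord_val -mul_polyC rmorphM /= (horner_mx_C A) rmorphXn /= horner_mx_X -mul_scalar_mx.
Qed.

Lemma cyclic_exists : mxminpoly A = char_poly A -> exists v, krylov v \in unitmx.
Proof.
move=> nd.
have [v [p [Hp pmax]]] := exists_max_lmp A.
have p0 := lmp_neq0 Hp.
have kall : forall w, kills A w p.
  move=> w; have [q Hq] := exists_lmp A w.
  have q0 := lmp_neq0 Hq.
  have [a [b [ap bq cab pab qab]]] := lcm_split p0 q0.
  have [g eg] := dvdpP _ _ ap.
  have [h eh] := dvdpP _ _ bq.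
  have H1 : islmp A (v *m horner_mx A g) a by apply: lmp_shift; rewrite -eg.
  have H2 : islmp A (w *m horner_mx A h) b by apply: lmp_shift; rewrite -eh.
  have H3 := lmp_add cab H1 H2.
  have s1 := pmax _ _ H3.
  have ab0 := lmp_neq0 H3.
  have s2 := dvdp_leq ab0 pab.
  have epab : p %= a * b by rewrite -dvdp_size_eqp // eqn_leq s2 s1.
  have qp : q %| p by rewrite (eqp_dvdr _ epab).
  have [r er] := dvdpP _ _ qp.
  by rewrite er; apply: kills_mul; case: Hq.
have hp0 : horner_mx A p = 0.
  by apply/row_matrixP => i; rewrite row0 rowE; exact: kall.
have sp : (N.+1 <= size p)%N.
  have := dvdp_leq p0 (mxminpoly_min hp0).
  by rewrite nd size_char_poly.
exists v; rewrite -row_free_unit; apply/inj_row_free => x xK.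
set q := \poly_(i < N) x 0 (inord i).
have kq : kills A v q.
  rewrite /kills horner_mx_poly mulmx_sumr -[RHS]xK mulmx_sum_row.
  by apply: eq_bigr => i _; rewrite -scalemxAr rowK.
have q0 : q = 0.
  apply: contraTeq isT => q0.
  have := dvdp_leq q0 (proj2 Hp _ kq).
  have : (size q <= N)%N by apply: size_poly.
  move: sp; clear => h1 h2 h3; by have := leq_trans h1 (leq_trans h3 h2); rewrite ltnn.
apply/rowP => i; rewrite mxE.
by have := congr1 (fun r : {poly F} => r`_i) q0; rewrite /q coef_poly ltn_ord coef0 inord_val.
Qed.

End Cyclic.

Lemma zmod4 (V : zmodType) (a b s c : V) : a - b + s - c = a - c + s - b.
Proof. by rewrite addrAC [a - b - c]addrAC [RHS]addrAC. Qed.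

Section Constr.
Variables (F : fieldType) (n' : nat) (beta : 'rV[F]_n'.+1).
Local Notation N := n'.+1.

Definition ev (i : 'I_N) : 'rV[F]_N := delta_mx 0 i.
Definition mx : 'I_N := ord_max.
Definition sc (i : 'I_N) : 'I_N := inord i.+1.
Definition pr (i : 'I_N) : 'I_N := inord i.-1.
Definition rowmx (r : 'I_N -> 'rV[F]_N) : 'M[F]_N := \matrix_i r i.
Definition Bm := rowmx (fun i => if i == mx then beta else ev (sc i)).
Definition cc := beta 0 mx.

Lemma ev_mul r i : ev i *m rowmx r = r i.
Proof. by rewrite /ev -rowE rowK. Qed.

Lemma ev_entry i j : ev i 0 j = (i == j)%:R.
Proof. by rewrite /ev mxE eqxx eq_sym. Qed.

Lemma mx_val : (mx : nat) = n'. Proof. by []. Qed.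

Lemma sc_val (i : 'I_N) : (i < n')%N -> (sc i : nat) = i.+1.
Proof. by move=> h; rewrite /sc inordK. Qed.

Lemma pr_val (i : 'I_N) : (pr i : nat) = i.-1.
Proof. by rewrite /pr inordK //; have := ltn_ord i; lia. Qed.

Lemma ordP (i j : 'I_N) : (i : nat) = j -> i = j.
Proof. exact: val_inj. Qed.

Lemma ordN (i j : 'I_N) : (i : nat) <> j -> (i == j) = false.
Proof. by move=> h; apply/eqP => e; apply: h; rewrite e. Qed.

Lemma beta_sum : beta = \sum_j beta 0 j *: ev j.
Proof. exact: row_sum_delta. Qed.

Lemma sum_mul (I : finType) (P : pred I) (f : I -> F) (g : I -> 'rV[F]_N) (M : 'M[F]_N) :
  (\sum_(i | P i) f i *: g i) *m M = \sum_(i | P i) f i *: (g i *m M).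
Proof. by rewrite mulmx_suml; apply: eq_bigr => i _; rewrite scalemxAl. Qed.


Lemma neq_mx (i : 'I_N) : i != mx -> (i < n')%N.
Proof.
move=> h; have := ltn_ord i; rewrite ltnS leq_eqVlt => /orP[/eqP e|//].
by case/eqP: h; apply: ordP.
Qed.

Ltac ordtac := intros; try apply: ordP; try apply: ordN;
  rewrite ?pr_val ?mx_val; (repeat rewrite sc_val ?pr_val ?mx_val); lia.

Lemma beta_split (Nm : 'M[F]_N) (P : pred 'I_N) :
  (forall j, ~~ P j -> j != mx -> ev j *m Nm = 0) ->
  beta *m Nm = cc *: (ev mx *m Nm) + \sum_(j | P j && (j != mx)) beta 0 j *: (ev j *m Nm).
Proof.
move=> h; rewrite [in LHS]beta_sum sum_mul (bigD1 mx) //=; congr (_ + _).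
rewrite (bigID P) /= [X in _ + X]big1 ?addr0.
  by apply: eq_bigl => j; rewrite andbC.
by move=> j /andP[jm pj]; rewrite h ?scaler0.
Qed.

Lemma mulQ (D : 'M[F]_N) (k : F) (v : 'rV[F]_N) :
  v *m (D *m D - k%:M) = v *m D *m D - k *: v.
Proof. by rewrite mulmxBr mul_mx_scalar mulmxA. Qed.

Lemma commQ (D : 'M[F]_N) (k : F) : D *m (D *m D - k%:M) = (D *m D - k%:M) *m D.
Proof. by rewrite mulmxBr mulmxBl scalar_mxC !mulmxA. Qed.

Lemma horner_Q (D : 'M[F]_N) (k : F) : horner_mx D ('X^2 - k%:P) = D *m D - k%:M.
Proof. by rewrite rmorphB /= rmorphXn /= horner_mx_X horner_mx_C expr2. Qed.

Lemma rows0 (M : 'M[F]_N) : (forall i, ev i *m M = 0) -> M = 0.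
Proof. by move=> h; apply/row_matrixP => i; rewrite row0 rowE; apply: h. Qed.

Section Case2.
Hypothesis Nodd : odd N.
Hypothesis N3 : (2 <= n')%N.
Hypothesis c0 : cc = 0.

Definition D2 := rowmx (fun i => if i == mx then beta
  else if odd i then ev (pr i) else ev (sc i)).
Definition N2 := Bm - D2.

Lemma c2_sq i : i != mx -> ev i *m D2 *m D2 = ev i.
Proof.
move=> im; have := neq_mx im => il.
rewrite !ev_mul (negPf im); case: ifP => oi; rewrite ev_mul.
  have -> : (pr i == mx) = false by ordtac.
  have -> : odd (pr i) = false by rewrite pr_val; lia.
  by congr ev; ordtac.
have -> : (sc i == mx) = false by ordtac.
have -> : odd (sc i) = true by rewrite sc_val //; lia.
by congr ev; ordtac.
Qed.


Lemma c2_beta : beta *m D2 *m D2 = beta.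
Proof.
rewrite [X in X *m D2 *m D2]beta_sum !sum_mul [RHS]beta_sum.
rewrite (bigD1 mx) //= [in RHS](bigD1 mx) //= -/cc c0 !scale0r !add0r.
by apply: eq_bigr => i im; rewrite c2_sq.
Qed.

Lemma c2_cube : D2 *m D2 *m D2 = D2.
Proof.
apply/row_matrixP => i; rewrite !rowE !mulmxA.
have [->|im] := eqVneq i mx.
  by rewrite -/(ev mx) ev_mul eqxx c2_beta.
by rewrite -/(ev i) c2_sq.
Qed.

Lemma c2_Nrow_even (i : 'I_N) : ~~ odd i -> ev i *m N2 = 0.
Proof.
move=> ei; rewrite mulmxBr /Bm !ev_mul.
case: ifP => _; first by rewrite subrr.
by rewrite (negPf ei) subrr.
Qed.

Lemma c2_Nrow_odd (i : 'I_N) : odd i -> ev i *m N2 = ev (sc i) - ev (pr i).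
Proof.
move=> oi; have im : (i == mx) = false by apply: ordN; move: Nodd oi; rewrite mx_val; lia.
by rewrite mulmxBr /Bm !ev_mul im oi.
Qed.

Lemma c2_nil : N2 *m N2 = 0.
Proof.
apply/row_matrixP => i; rewrite row0 rowE mulmxA -/(ev i).
case: (boolP (odd i)) => oi; last by rewrite c2_Nrow_even // mul0mx.
have il : (i < n')%N by move: Nodd oi (ltn_ord i); lia.
rewrite c2_Nrow_odd // mulmxBl !c2_Nrow_even ?subrr //.
  by rewrite pr_val; lia.
by rewrite sc_val //; lia.
Qed.

End Case2.

Section Case3.
Hypothesis Neven : ~~ odd N.
Hypothesis N2 : (1 <= n')%N.
Hypothesis c0 : cc = 0.
Variable x : F.

Definition pe : 'I_N := pr mx.
Definition w3 := \sum_(j : 'I_N | odd j && (j != mx)) beta 0 j *: ev j.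
Definition D3 := rowmx (fun i => if i == mx then w3 + (x ^+ 2) *: ev pe
  else if odd i then ev (pr i) else ev (sc i)).
Definition N3 := Bm - D3.

Lemma pe_val : (pe : nat) = n'.-1. Proof. by rewrite /pe pr_val. Qed.

Lemma c3_sq i : i != mx -> i != pe -> ev i *m D3 *m D3 = ev i.
Proof.
move=> im ip; have := neq_mx im => il.
have ip' : (i : nat) <> n'.-1 by move=> e; case/eqP: ip; apply: ordP; rewrite pe_val.
rewrite !ev_mul (negPf im); case: ifP => oi; rewrite ev_mul.
  have -> : (pr i == mx) = false by move: Neven oi; ordtac.
  have -> : odd (pr i) = false by rewrite pr_val; lia.
  by congr ev; ordtac.
have -> : (sc i == mx) = false by move: Neven oi; ordtac.
have -> : odd (sc i) = true by rewrite sc_val //; lia.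
by congr ev; ordtac.
Qed.

Lemma c3_w : w3 *m D3 *m D3 = w3.
Proof.
rewrite /w3 !sum_mul; apply: eq_bigr => j /andP[oj jm]; rewrite c3_sq //.
by apply/negP => /eqP e; move: oj; rewrite e pe_val; move: Neven; lia.
Qed.

Definition Q31 := D3 *m D3 - 1%:M.
Definition Q32 := D3 *m D3 - (x ^+ 2)%:M.

Lemma c3_poly : Q31 *m Q32 = 0.
Proof.
have e21 : Q31 *m Q32 = Q32 *m Q31.
  by rewrite /Q31 /Q32 !mulmxBr !mulmxBl !mulmx1 !mul1mx scalar_mxC !opprB !addrA zmod4.
apply: rows0 => i.
have pem : (pe == mx) = false by ordtac.
have ope : odd pe = false by rewrite pe_val; move: Neven N2; lia.
have spe : sc pe = mx by ordtac.
have hpe : ev pe *m Q32 = w3.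
  by rewrite /Q32 mulQ ev_mul pem ope spe ev_mul eqxx addrK.
have hmx : ev mx *m Q32 = w3 *m D3.
  rewrite /Q32 mulQ ev_mul eqxx mulmxDl -scalemxAl ev_mul pem ope spe.
  by rewrite -/(ev mx) addrK.
have hw : w3 *m Q31 = 0 by rewrite /Q31 mulQ c3_w scale1r subrr.
have [->|im] := eqVneq i mx.
  by rewrite e21 mulmxA hmx -mulmxA commQ mulmxA hw mul0mx.
have [->|ip] := eqVneq i pe.
  by rewrite e21 mulmxA hpe hw.
by rewrite mulmxA [ev i *m Q31]mulQ c3_sq // scale1r subrr mul0mx.
Qed.

Lemma c3_Nrow_even (i : 'I_N) : ~~ odd i -> ev i *m N3 = 0.
Proof.
move=> ei; have im : (i == mx) = false by move: Neven ei; ordtac.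
by rewrite mulmxBr /Bm !ev_mul im (negPf ei) subrr.
Qed.

Lemma c3_nil : N3 *m N3 = 0.
Proof.
apply: rows0 => i; rewrite mulmxA.
case: (boolP (odd i)) => oi; last by rewrite c3_Nrow_even // mul0mx.
have [->|im] := eqVneq i mx.
  have hN : ev mx *m N3 = beta - (w3 + x ^+ 2 *: ev pe).
    by rewrite /N3 mulmxBr /Bm !ev_mul eqxx.
  rewrite hN mulmxBl mulmxDl.
  rewrite (@beta_split N3 (fun j : 'I_N => odd j)); last first.
    by move=> j oj _; rewrite c3_Nrow_even.
  rewrite -scalemxAl (@c3_Nrow_even pe); last by rewrite pe_val; move: Neven N2; lia.
  by rewrite scaler0 addr0 c0 scale0r add0r /w3 sum_mul subrr.
have il := neq_mx im.
have hN : ev i *m N3 = ev (sc i) - ev (pr i) by rewrite /N3 mulmxBr /Bm !ev_mul (negPf im) oi.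
rewrite hN mulmxBl !c3_Nrow_even ?subrr //.
  by rewrite pr_val; lia.
by rewrite sc_val //; lia.
Qed.

End Case3.

Section Case1.
Hypothesis N5 : (4 <= n')%N.

Definition isV (i : 'I_N) := (0 < i)%N && odd (i + N).
Definition w1 := \sum_(j : 'I_N | isV j && (j != mx)) beta 0 j *: (ev j - cc *: ev (pr j)).
Definition D1 := rowmx (fun i => if i == mx then w1 + cc *: ev mx
  else if isV i then (cc ^+ 2) *: ev (pr i) else ev (sc i)).
Definition N1 := Bm - D1.
Definition Q1 := D1 *m D1 - (cc ^+ 2)%:M.

Lemma isV_mx : isV mx.
Proof. by rewrite /isV mx_val; apply/andP; split; lia. Qed.

Lemma c1_S i : ~~ isV i -> ev i *m D1 = ev (sc i).
Proof.
move=> vi; have im : (i == mx) = false.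
  by apply/negbTE; apply: contraNneq vi => ->; exact: isV_mx.
by rewrite ev_mul im (negPf vi).
Qed.

Lemma c1_V i : isV i -> i != mx -> ev i *m D1 = (cc ^+ 2) *: ev (pr i).
Proof. by move=> vi im; rewrite ev_mul (negPf im) vi. Qed.

Lemma c1_prV j : isV j -> ~~ isV (pr j) /\ sc (pr j) = j.
Proof.
rewrite /isV => /andP[j0 oj]; split.
  by rewrite pr_val; apply/negP => /andP[h1 h2]; move: j0 oj h1 h2; lia.
by have := ltn_ord j; ordtac.
Qed.

Lemma c1_F4 j : isV j -> j != mx ->
  (ev j - cc *: ev (pr j)) *m D1 = - cc *: (ev j - cc *: ev (pr j)).
Proof.
move=> vj jm; have [npj spj] := c1_prV vj.
rewrite mulmxBl -scalemxAl c1_V // c1_S // spj.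
by rewrite scalerBr !scaleNr opprK scalerA -expr2 addrC.
Qed.

Lemma c1_w : w1 *m D1 = - cc *: w1.
Proof.
rewrite /w1 sum_mul scaler_sumr; apply: eq_bigr => j /andP[vj jm].
by rewrite c1_F4 // !scalerA mulrC.
Qed.

Lemma c1_mx : ev mx *m Q1 = 0.
Proof.
rewrite /Q1 mulQ ev_mul eqxx mulmxDl c1_w -scalemxAl -/(ev mx) ev_mul eqxx.
by rewrite scalerDr scalerA addrA scaleNr addNr add0r -expr2 subrr.
Qed.

Lemma c1_V2 i : isV i -> i != mx -> ev i *m Q1 = 0.
Proof.
move=> vi im; have [npi spi] := c1_prV vi.
by rewrite /Q1 mulQ c1_V // -scalemxAl c1_S // spi subrr.
Qed.

Lemma c1_S2 i : ~~ isV i -> isV (sc i) -> sc i != mx -> ev i *m Q1 = 0.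
Proof.
move=> vi vsi sim.
have im : i != mx by apply: contraNneq vi => ->; exact: isV_mx.
have il := neq_mx im.
have psi : pr (sc i) = i by ordtac.
by rewrite /Q1 mulQ c1_S // c1_V // psi subrr.
Qed.

Lemma c1_poly : D1 *m Q1 = 0.
Proof.
apply: rows0 => i.
case: (boolP (isV i)) => vi.
  rewrite /Q1 commQ -/Q1 mulmxA.
  have [->|im] := eqVneq i mx; first by rewrite c1_mx mul0mx.
  by rewrite c1_V2 // mul0mx.
have im : i != mx by apply: contraNneq vi => ->; exact: isV_mx.
have il := neq_mx im.
rewrite mulmxA c1_S //.
case: (boolP (isV (sc i))) => vsi.
  have [->|sim] := eqVneq (sc i) mx; first exact: c1_mx.
  exact: c1_V2.
have [i0 Nodd] : (i : nat) = 0%N /\ odd N.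
  by move: vi vsi; rewrite /isV sc_val //; move=> h1 h2; split; move: h1 h2; lia.
have ssl : (sc i < n')%N by rewrite sc_val //; lia.
apply: c1_S2 => //.
  rewrite /isV !sc_val //; [by rewrite i0; move: Nodd; lia | by lia].
by apply/negbT; ordtac.
Qed.

Lemma c1_NS i : ~~ isV i -> ev i *m N1 = 0.
Proof.
move=> vi; have im : (i == mx) = false.
  by apply/negbTE; apply: contraNneq vi => ->; exact: isV_mx.
by rewrite /N1 mulmxBr /Bm ev_mul im c1_S // subrr.
Qed.

Lemma c1_nil : N1 *m N1 = 0.
Proof.
apply: rows0 => i; rewrite mulmxA.
case: (boolP (isV i)) => vi; last by rewrite c1_NS // mul0mx.
have [->|im] := eqVneq i mx.
  have hN : ev mx *m N1 = beta - (w1 + cc *: ev mx).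
    by rewrite /N1 mulmxBr /Bm !ev_mul eqxx.
  have hw : w1 *m N1 = \sum_(j | isV j && (j != mx)) beta 0 j *: (ev j *m N1).
    rewrite /w1 sum_mul; apply: eq_bigr => j /andP[vj _]; have [npj _] := c1_prV vj.
    by rewrite mulmxBl -scalemxAl (c1_NS npj) scaler0 subr0.
  rewrite hN mulmxBl mulmxDl hw (@beta_split N1 isV); last first.
    by move=> j vj _; rewrite c1_NS.
  by rewrite -scalemxAl [X in _ - X]addrC subrr.
have il := neq_mx im.
have hN : ev i *m N1 = ev (sc i) - cc ^+ 2 *: ev (pr i).
  by rewrite /N1 mulmxBr /Bm !ev_mul (negPf im) vi.
have [npi _] := c1_prV vi.
rewrite hN mulmxBl -scalemxAl !c1_NS ?scaler0 ?subrr //.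
by move: vi; rewrite /isV sc_val //; move=> h; apply/negP => h'; move: h h'; lia.
Qed.

End Case1.
End Constr.
Arguments mx {n'}.
Arguments ev {F n'}.

Section Finish.
Variables (F : fieldType) (n' : nat).
Local Notation N := n'.+1.

Lemma finish (A D Nm P : 'M[F]_N) (rs : seq F) :
  P \in unitmx -> P *m A = (D + Nm) *m P -> Nm *m Nm = 0 -> uniq rs ->
  horner_mx D (\prod_(r <- rs) ('X - r%:P)) = 0 ->
  exists M : 'M[F]_N, [/\ M *m M = 0, diagonalizable (A + M),
    (forall a, eigenvalue (A + M) a -> a \in rs) &
    (forall a, eigenvalue D a -> eigenvalue (A + M) a)].
Proof.
move=> Pu eA nil urs hD.
pose M := - (invmx P *m Nm *m P).
have eA' : A = invmx P *m (D + Nm) *m P by rewrite -mulmxA -eA mulKmx.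
have eAM : A + M = invmx P *m D *m P.
  by rewrite /M eA' mulmxDr mulmxDl addrK.
have hAM : horner_mx (A + M) (\prod_(r <- rs) ('X - r%:P)) = 0.
  have -> : A + M = invmx P *m D *m invmx (invmx P) by rewrite invmxK.
  by rewrite horner_mx_uconj ?unitmx_inv // hD mulmx0 mul0mx.
exists M; split.
- rewrite /M mulNmx mulmxN opprK !mulmxA -[invmx P *m Nm *m P *m invmx P]mulmxA.
  by rewrite mulmxV // mulmx1 -[invmx P *m Nm *m Nm]mulmxA nil mulmx0 mul0mx.
- apply/diagonalizableP; exists rs => //; exact: mxminpoly_min.
- move=> a; rewrite eigenvalue_root_min => ra.
  by rewrite -root_prod_XsubC (root_dvdp (mxminpoly_min hAM) ra).
- move=> a /eigenvalueP [v vD v0]; apply/eigenvalueP; exists (v *m P).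
    by rewrite eAM !mulmxA mulmxK // vD scalemxAl.
  apply: contraNneq v0 => vP0.
  by rewrite -[v](mulmxK Pu) vP0 mul0mx.
Qed.

End Finish.

Section Companion.
Variables (F : fieldType) (n' : nat).
Local Notation N := n'.+1.
Variable A : 'M[F]_N.

Lemma companion_form : mxminpoly A = char_poly A ->
  exists (P : 'M[F]_N) (beta : 'rV[F]_N), P \in unitmx /\ P *m A = Bm beta *m P.
Proof.
move=> nd; have [v Ku] := cyclic_exists nd.
exists (krylov A v), (v *m A ^+ N *m invmx (krylov A v)); split => //.
apply/row_matrixP => i; rewrite !row_mul /Bm /rowmx !rowK.
have [->|im] := eqVneq i mx.
  by rewrite mulmxKV // -mulmxA exprSr.
rewrite /ev -rowE rowK sc_val ?neq_mx //.
by rewrite -mulmxA exprSr.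
Qed.

Lemma trace_Bm (beta : 'rV[F]_N) : \tr (Bm beta) = cc beta.
Proof.
rewrite /mxtrace (bigD1 mx) //= big1 ?addr0.
  by rewrite /Bm /rowmx mxE eqxx.
move=> i im; rewrite /Bm /rowmx mxE (negPf im) ev_entry.
have il := neq_mx im.
by rewrite (_ : (sc i == i) = false) //; apply: ordN; rewrite sc_val //; lia.
Qed.

Lemma trace_sim (P B : 'M[F]_N) : P \in unitmx -> P *m A = B *m P -> \tr A = \tr B.
Proof.
move=> Pu e.
have -> : A = invmx P *m (B *m P) by rewrite -e mulKmx.
by rewrite mxtrace_mulC mulmxK.
Qed.

End Companion.

Section Final.
Variables (F : fieldType) (n' : nat).
Local Notation N := n'.+1.

Lemma nz_entry (v : 'rV[F]_N) j : v 0 j != 0 -> v != 0.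
Proof. by apply: contraNneq => ->; rewrite mxE. Qed.

Lemma eigD (D : 'M[F]_N) (v : 'rV[F]_N) a : v *m D = a *: v -> v != 0 -> eigenvalue D a.
Proof. by move=> h v0; apply/eigenvalueP; exists v. Qed.

Lemma neq_opp (x : F) : (2%:R : F) != 0 -> x != 0 -> x != - x.
Proof.
move=> two x0; apply/negP => /eqP e.
have : 2%:R * x == 0 by rewrite mulr2n mulrDl mul1r {1}e addNr.
by rewrite mulf_eq0 (negPf two) (negPf x0).
Qed.

Lemma ev_row_entry (M : 'M[F]_N) i j : (ev i *m M) 0 j = M i j.
Proof. by rewrite /ev -rowE mxE. Qed.

Lemma zmodz (V : zmodType) (a b : V) : a - (b + a) - - b = 0.
Proof. by rewrite opprD addrCA subrr addr0 opprK addNr. Qed.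

Lemma ev_entry' (i j : 'I_N) : (ev i : 'rV[F]_N) 0 j = (i == j)%:R.
Proof. exact: ev_entry. Qed.

Lemma part1 (A P : 'M[F]_N) (beta : 'rV[F]_N) :
  (4 <= n')%N -> (2%:R : F) != 0 -> P \in unitmx -> P *m A = Bm beta *m P ->
  cc beta != 0 ->
  exists M : 'M[F]_N, M *m M = 0 /\ diagonalizable (A + M) /\
    (forall a : F, eigenvalue (A + M) a <-> (a = 0 \/ a = cc beta \/ a = - cc beta)).
Proof.
move=> N5 two Pu eA cnz; set c := cc beta.
have eB : Bm beta = D1 beta + N1 beta by rewrite /N1 addrC subrK.
have uq : uniq [:: 0; c; -c].
  rewrite /= !inE negb_or eq_sym cnz /= eq_sym oppr_eq0 cnz /= andbT.
  exact: neq_opp.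
have hp : horner_mx (D1 beta) (\prod_(r <- [:: 0; c; -c]) ('X - r%:P)) = 0.
  have -> : \prod_(r <- [:: 0; c; -c]) ('X - r%:P) = 'X * ('X^2 - (c ^+ 2)%:P).
    by rewrite !big_cons big_nil mulr1 polyCN polyC0 (rmorphXn polyC) /=; ring.
  by rewrite rmorphM /= horner_mx_X horner_Q; exact: c1_poly.
rewrite eB in eA.
have [M [MM dg ev1 ev2]] := finish Pu eA (c1_nil beta N5) uq hp.
exists M; split => //; split => //.
move=> a; split.
  by move/ev1; rewrite !inE => /or3P [] /eqP ->; auto.
have N5' : (2 < N)%N by lia.
pose i1 : 'I_N := inord (if odd N then 2 else 1).
have i1v : (i1 : nat) = if odd N then 2%N else 1%N.
  by rewrite /i1 inordK //; case: ifP => _; lia.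
have vi1 : isV i1 by rewrite /isV i1v; case: ifP => h; apply/andP; split; move: h; lia.
have i1m : i1 != mx by apply/negbT; apply: ordN; rewrite i1v mx_val; case: ifP; lia.
have [npi spi] := c1_prV N5 vi1.
have pi1 : (pr i1 == i1) = false by apply: ordN; rewrite pr_val i1v; case: ifP; lia.
case=> [->|[->|->]].
- apply: ev2; apply: (@eigD _ (c *: ev (pr mx) - ev mx - c^-1 *: w1 beta)).
    have hm : ev mx *m D1 beta = w1 beta + c *: ev mx by rewrite /D1 ev_mul eqxx.
    rewrite !mulmxBl -!scalemxAl (c1_w beta N5) hm -/c.
    have [npm spm] := c1_prV N5 (isV_mx N5).
    rewrite (c1_S beta N5 npm) spm scalerA mulrN mulVf // scaleN1r scale0r.
    exact: zmodz.
  apply: (@nz_entry _ mx); rewrite !mxE !eqxx /=.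
  have -> : ((mx : 'I_N) == pr mx) = false by apply: ordN; rewrite pr_val mx_val; lia.
  have -> : w1 beta 0 mx = 0.
    rewrite /w1 summxE big1 // => j /andP[_ jm].
    rewrite !mxE !eqxx /= eq_sym (negPf jm).
    have -> : (mx == pr j) = false.
      by apply: ordN; rewrite pr_val mx_val; have := neq_mx jm; lia.
    by rewrite mulr0 subrr mulr0.
  by rewrite mulr0 mulr0 sub0r subr0 oppr_eq0 oner_eq0.
- apply: ev2; apply: (@eigD _ (ev i1 + c *: ev (pr i1))).
    rewrite mulmxDl -scalemxAl (c1_V beta vi1 i1m) (c1_S beta N5 npi) spi.
    by rewrite scalerDr scalerA -expr2 addrC.
  apply: (@nz_entry _ i1); rewrite !mxE !eqxx /= [i1 == _]eq_sym pi1.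
  by rewrite mulr0 addr0 oner_eq0.
- apply: ev2; apply: (@eigD _ (ev i1 - c *: ev (pr i1))).
    exact: (c1_F4 beta N5 vi1 i1m).
  apply: (@nz_entry _ i1); rewrite !mxE !eqxx /= [i1 == _]eq_sym pi1.
  by rewrite mulr0 subr0 oner_eq0.
Qed.


Lemma part2 (A P : 'M[F]_N) (beta : 'rV[F]_N) :
  (4 <= n')%N -> (2%:R : F) != 0 -> P \in unitmx -> P *m A = Bm beta *m P ->
  cc beta = 0 -> odd N ->
  exists M : 'M[F]_N, M *m M = 0 /\ diagonalizable (A + M) /\
    (forall a : F, eigenvalue (A + M) a <-> (a = 0 \/ a = 1 \/ a = - 1)).
Proof.
move=> N5 two Pu eA c0 Nodd.
have N3 : (1 < n')%N by lia.
have eB : Bm beta = D2 beta + N2 beta by rewrite /N2 addrC subrK.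
have uq : uniq [:: 0; 1; -1 : F].
  rewrite /= !inE negb_or eq_sym oner_eq0 /= eq_sym oppr_eq0 oner_eq0 /= andbT.
  exact: neq_opp (oner_neq0 _).
have hp : horner_mx (D2 beta) (\prod_(r <- [:: 0; 1; -1 : F]) ('X - r%:P)) = 0.
  have -> : \prod_(r <- [:: 0; 1; -1 : F]) ('X - r%:P) = 'X * ('X^2 - (1 : F)%:P).
    by rewrite !big_cons big_nil mulr1 polyCN polyC0 /=; ring.
  rewrite rmorphM /= horner_mx_X horner_Q -[_ * _]/(_ *m _) mulmxBr mul_mx_scalar scale1r mulmxA.
  by rewrite (c2_cube Nodd N3 c0) subrr.
rewrite eB in eA.
have [M [MM dg ev1 ev2]] := finish Pu eA (c2_nil beta Nodd N3) uq hp.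
exists M; split => //; split => //.
move=> a; split.
  by move/ev1; rewrite !inE => /or3P [] /eqP ->; auto.
pose i0 : 'I_N := ord0.
pose i1 : 'I_N := inord 1.
have i1v : (i1 : nat) = 1%N by rewrite /i1 inordK //; lia.
have h0 : ev i0 *m D2 beta = ev i1.
  rewrite /D2 ev_mul.
  have -> : (i0 == mx) = false by apply: ordN; rewrite mx_val /=; lia.
  by rewrite /= ; congr ev; apply: ordP; rewrite sc_val /= ?i1v //; lia.
have h1 : ev i1 *m D2 beta = ev i0.
  rewrite /D2 ev_mul.
  have -> : (i1 == mx) = false by apply: ordN; rewrite mx_val i1v; lia.
  by rewrite i1v /=; congr ev; apply: ordP; rewrite pr_val i1v.
have i01 : (i0 == i1) = false by apply: ordN; rewrite i1v.
case=> [->|[->|->]].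
- apply: ev2; apply: (@eigD _ (ev mx - beta *m D2 beta)).
    rewrite mulmxBl /D2 ev_mul eqxx -/(D2 beta) (c2_beta Nodd N3 c0).
    by rewrite subrr scale0r.
  apply: (@nz_entry _ mx); rewrite !mxE !eqxx /=.
  have -> : \sum_(j < N) beta 0 j * D2 beta j mx = 0.
    apply: big1 => j _.
    rewrite -ev_row_entry.
    rewrite /D2 ev_mul.
    have [->|jm] := eqVneq j mx; first by rewrite -/(cc beta) c0 mulr0.
    have jl := neq_mx jm.
    case: ifP => oj; rewrite mxE eqxx /=.
      have -> : ((mx : 'I_N) == pr j) = false by apply: ordN; rewrite pr_val mx_val; lia.
      by rewrite mulr0.
    have -> : ((mx : 'I_N) == sc j) = false.
      by apply: ordN; rewrite sc_val // mx_val; move: Nodd oj; lia.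
    by rewrite mulr0.
  by rewrite subr0 oner_eq0.
- apply: ev2; apply: (@eigD _ (ev i0 + ev i1)).
    by rewrite mulmxDl h0 h1 scale1r addrC.
  apply: (@nz_entry _ i0); rewrite !mxE !eqxx /=.
  rewrite (_ : nat_of_bool (_ == _) = 0%N) ?addr0 ?oner_eq0 //.
  by case: eqP => // e; move: i01; rewrite e eqxx.
- apply: ev2; apply: (@eigD _ (ev i0 - ev i1)).
    by rewrite mulmxBl h0 h1 scaleN1r opprB.
  apply: (@nz_entry _ i0); rewrite !mxE !eqxx /=.
  rewrite (_ : nat_of_bool (_ == _) = 0%N) ?subr0 ?oner_eq0 //.
  by case: eqP => // e; move: i01; rewrite e eqxx.
Qed.

Lemma part3 (A P : 'M[F]_N) (beta : 'rV[F]_N) (x : F) :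
  (1 <= n')%N -> (2%:R : F) != 0 -> P \in unitmx -> P *m A = Bm beta *m P ->
  cc beta = 0 -> ~~ odd N -> [/\ x != 0, x != 1 & x != - 1] ->
  exists M : 'M[F]_N, M *m M = 0 /\ diagonalizable (A + M) /\
    exists s : seq F, (size s <= 4)%N /\ (forall a : F, eigenvalue (A + M) a -> a \in s).
Proof.
move=> N2' two Pu eA c0 Neven [x0 x1 xm1].
have eB : Bm beta = D3 beta x + N3 beta x by rewrite /N3 addrC subrK.
have uq : uniq [:: 1; -1; x; -x].
  rewrite /= !inE !negb_or.
  rewrite (neq_opp two (oner_neq0 _)) eq_sym x1 /= .
  have -> : (1 == - x) = false by apply/negbTE; rewrite eq_sym eqr_oppLR.
  have -> : (-1 == x) = false by apply/negbTE; rewrite eq_sym.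
  have -> : (-1 == - x) = false by apply/negbTE; rewrite eqr_opp eq_sym.
  by rewrite (neq_opp two x0).
have hp : horner_mx (D3 beta x) (\prod_(r <- [:: 1; -1; x; -x]) ('X - r%:P)) = 0.
  have -> : \prod_(r <- [:: 1; -1; x; -x]) ('X - r%:P) =
      ('X^2 - (1 : F)%:P) * ('X^2 - (x ^+ 2)%:P).
    by rewrite !big_cons big_nil mulr1 !polyCN (rmorphXn polyC) /=; ring.
  by rewrite rmorphM /= !horner_Q; exact: c3_poly.
rewrite eB in eA.
have [M [MM dg ev1 ev2]] := finish Pu eA (c3_nil Neven N2' c0 x) uq hp.
exists M; split => //; split => //.
by exists [:: 1; -1; x; -x]; split.
Qed.

End Final.

Lemma two_neq0 (F : fieldType) : odd_char F -> (2%:R : F) != 0.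
Proof.
move=> [p [pch po]]; apply/negP => /eqP h2.
have pd : (p %| 2)%N by rewrite (dvdn_pcharf pch) h2 eqxx.
have pp := pcharf_prime pch.
have := dvdn_leq (isT : (0 < 2)%N) pd; have := prime_gt1 pp; move: po; lia.
Qed.

Lemma main1 : forall (F : fieldType) (n : nat) (A : 'M[F]_n),
      odd_char F -> (5 <= n)%N -> nonderogatory A ->
      let c := \tr A in
      (c != 0 ->
         exists M : 'M[F]_n, M *m M = 0 /\ diagonalizable (A + M) /\
           (forall a : F, eigenvalue (A + M) a <-> (a = 0 \/ a = c \/ a = - c)))
      /\
      (c = 0 -> odd n ->
         exists M : 'M[F]_n, M *m M = 0 /\ diagonalizable (A + M) /\
           (forall a : F, eigenvalue (A + M) a <-> (a = 0 \/ a = 1 \/ a = - 1)))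
      /\
      (c = 0 -> ~~ odd n -> (exists x : F, [/\ x != 0, x != 1 & x != - 1]) ->
         exists M : 'M[F]_n, M *m M = 0 /\ diagonalizable (A + M) /\
           exists s : seq F, (size s <= 4)%N /\
             (forall a : F, eigenvalue (A + M) a -> a \in s)).
Proof.
move=> F [|n'] A och n5 nd c //.
have two := two_neq0 och.
have n4 : (4 <= n')%N by lia.
move: nd => /= nd.
have [P [beta [Pu eA]]] := companion_form nd.
have ec : c = cc beta by rewrite /c (trace_sim Pu eA) trace_Bm.
split; [|split].
- move=> cnz; rewrite ec in cnz *; exact: (part1 n4 two Pu eA cnz).
- by move=> c0 on; rewrite ec in c0; exact: (part2 n4 two Pu eA c0 on).
- move=> c0 ev [x hx]; rewrite ec in c0.
  by apply: (part3 (x := x) _ two Pu eA c0 ev hx); lia.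
Qed.


Lemma fin_odd_char (K : finFieldType) : odd #|K| -> (5 <= #|K|)%N -> odd_char K.
Proof.
move=> oK K5; have [p pp pch] := finPcharP K.
exists p; split => //.
have e := card_pprimeChar pch.
have e' : #|K| = (p ^ logn p #|K|)%N by exact: e.
move: oK; rewrite e' oddX => /orP [/eqP l0|//].
by move: K5; rewrite e' l0 expn0.
Qed.

Lemma fin_elt (K : finFieldType) : (5 <= #|K|)%N ->
  exists x : K, [/\ x != 0, x != 1 & x != - 1].
Proof.
move=> K5; apply: NNPP => hn.
have all_in : forall x : K, x \in [:: 0; 1; -1].
  move=> x; rewrite !inE; apply/negPn/negP => h; apply: hn; exists x.
  by move: h; rewrite !negb_or => /and3P[].
have e : #|K| = #|[:: 0; 1; -1 : K]| by apply: eq_card => x; rewrite all_in.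
have := card_size [:: 0; 1; -1 : K]; rewrite -e /= => h; by have := leq_trans K5 h.
Qed.

Theorem proposition2p1 :
  (forall (F : fieldType) (n : nat) (A : 'M[F]_n),
      odd_char F -> (5 <= n)%N -> nonderogatory A ->
      let c := \tr A in
      (* (1) *)
      (c != 0 ->
         exists M : 'M[F]_n, M *m M = 0 /\ diagonalizable (A + M) /\
           (forall a : F, eigenvalue (A + M) a <-> (a = 0 \/ a = c \/ a = - c)))
      /\
      (* (2) *)
      (c = 0 -> odd n ->
         exists M : 'M[F]_n, M *m M = 0 /\ diagonalizable (A + M) /\
           (forall a : F, eigenvalue (A + M) a <-> (a = 0 \/ a = 1 \/ a = - 1)))
      /\
      (* (3) : F is not F_3, i.e. F has an element outside {0, 1, -1} *)
      (c = 0 -> ~~ odd n -> (exists x : F, [/\ x != 0, x != 1 & x != - 1]) ->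
         exists M : 'M[F]_n, M *m M = 0 /\ diagonalizable (A + M) /\
           exists s : seq F, (size s <= 4)%N /\
             (forall a : F, eigenvalue (A + M) a -> a \in s)))
  /\
  (* "In particular": finite fields of odd cardinality q >= 5 *)
  (forall (K : finFieldType) (n : nat) (A : 'M[K]_n),
      odd #|K| -> (5 <= #|K|)%N -> (5 <= n)%N -> nonderogatory A ->
      exists D M : 'M[K]_n, diagonalizable D /\ M *m M = 0 /\ A = D + M).
Proof.
split; first exact: main1.
move=> K n A oK K5 n5 nd.
have och := fin_odd_char oK K5.
have [h1 [h2 h3]] := main1 och n5 nd.
have fin : forall M : 'M[K]_n, M *m M = 0 -> diagonalizable (A + M) ->
    exists D M : 'M[K]_n, diagonalizable D /\ M *m M = 0 /\ A = D + M.
  move=> M MM dg; exists (A + M), (- M); split => //; split.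
    by rewrite mulNmx mulmxN opprK.
  by rewrite addrK.
case: (eqVneq (\tr A) 0) => c0.
  case: (boolP (odd n)) => on.
    by have [M [MM [dg _]]] := h2 c0 on; apply: fin MM dg.
  by have [M [MM [dg _]]] := h3 c0 on (fin_elt K5); apply: fin MM dg.
by have [M [MM [dg _]]] := h1 c0; apply: fin MM dg.
Qed.
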